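(* Let $p$ be a smooth function on $T^\ast(\mathbb{R}^n)\smallsetminus0$ with $\operatorname{Re}p=\xi_1$, and let $\gamma=[a,b]\times\{w_0\}$ be a bicharacteristic of $\operatorname{Re}p=\xi_1$. If $\operatorname{Im}p$ strongly changes sign from $-$ to $+$ on $\gamma$, then $L_p(\gamma)$ is defined and $0\le L_p(\gamma)\le|\gamma|$. Moreover, for every $\delta,\varepsilon>0$ there exists a bicharacteristic $\tilde\gamma=[\tilde a,\tilde b]\times\{\tilde w\}$ of $\operatorname{Re}p$ with $a-\varepsilon<\tilde a\le\tilde b<b+\varepsilon$ and $|\tilde w-w_0|<\varepsilon$ such that $\operatorname{Im}p$ strongly changes sign from $-$ to $+$ on $\tilde\gamma$ and $|\tilde\gamma|<L_p(\gamma)+\delta$.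
   Context: Write points of $T^\ast(\mathbb{R}^n)$ as $(x_1,x',\xi_1,\xi')$. A bicharacteristic of $\xi_1$ is $\gamma=[a,b]\times\{w_0\}=\{(t,x',0,\xi'):a\le t\le b\}$, $w_0=(x',0,\xi')$; write $g(t,w)$; $|\gamma|=b-a$. For $\gamma_j=[a_j,b_j]\times\{w_j\}$, $\gamma_j\dashrightarrow\gamma$ means $\liminf a_j\ge a$, $\limsup b_j\le b$, $w_j\to w_0$. $\operatorname{Im}p$ strongly changes sign from $-$ to $+$ on $[a,b]\times\{w_0\}$ if $\operatorname{Im}p(t,w_0)=0$ for $a\le t\le b$ and for every $\varepsilon>0$ there exist $a-\varepsilon<s_-<a$, $b<s_+<b+\varepsilon$ with $\operatorname{Im}p(s_-,w_0)<0<\operatorname{Im}p(s_+,w_0)$. If some sequence of bicharacteristics $\gamma_j$ of $\xi_1$ with this sign change satisfies $\gamma_j\dashrightarrow\gamma$, then $L_p(\gamma)=\inf\liminf_j|\gamma_j|$ over all such sequences (otherwise undefined). *)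

(* Defs.v *)
From HB Require Import structures.
From mathcomp Require Import all_boot all_order all_algebra.
From mathcomp Require Import all_classical all_reals all_analysis.
From mathcomp Require Import complex.
Set Implicit Arguments. Unset Strict Implicit. Unset Printing Implicit Defensive.
Import Order.TTheory GRing.Theory Num.Theory.
Import numFieldNormedType.Exports.
Local Open Scope classical_set_scope.
Local Open Scope ring_scope.

Definition cotangent (R : realType) (n : nat) := ('rV[R]_n * 'rV[R]_n)%type.

Definition Tstar0 (R : realType) (n : nat) : set (cotangent R n) :=
  [set z | z.2 != 0].

Fixpoint smoothk (R : realType) (V : normedModType R) (U : set V) (k : nat)
  (f : V -> R) : Prop :=
  match k with
  | 0 => forall z, U z -> {for z, continuous f}
  | k'.+1 => (forall z, U z -> differentiable f z) /\
             (forall v : V, smoothk U k' (fun z => 'D_v f z))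
  end.

Definition smooth_on (R : realType) (V : normedModType R) (U : set V)
  (f : V -> R) : Prop := open U /\ forall k, smoothk U k f.

Definition csmooth_on (R : realType) (V : normedModType R) (U : set V)
  (p : V -> R[i]) : Prop :=
  smooth_on U (fun z => complex.Re (p z)) /\ smooth_on U (fun z => complex.Im (p z)).

(* w = (x', xi') standing for (x', 0, xi'); n = m.+1 *)
Definition wpt (R : realType) (m : nat) := ('rV[R]_m * 'rV[R]_m)%type.

Definition gpt (R : realType) (m : nat) (t : R) (w : wpt R m) : cotangent R m.+1 :=
  (row_mx (\row_(_ < 1) t) w.1, row_mx (0 : 'rV[R]_1) w.2).

(* [a,b] x {w} is a bicharacteristic of xi_1 in T^*(R^n) \ 0 *)
Definition bichar (R : realType) (m : nat) (a b : R) (w : wpt R m) : Prop :=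
  a <= b /\ w.2 != 0.

Definition strong_sign_change (R : realType) (m : nat)
  (p : cotangent R m.+1 -> R[i]) (a b : R) (w : wpt R m) : Prop :=
  (forall t, a <= t <= b -> complex.Im (p (gpt t w)) = 0) /\
  (forall e : R, 0 < e -> exists sm sp : R,
     a - e < sm < a /\ b < sp < b + e /\
     complex.Im (p (gpt sm w)) < 0 /\ 0 < complex.Im (p (gpt sp w))).

Definition Lp_set (R : realType) (m : nat) (p : cotangent R m.+1 -> R[i])
  (a b : R) (w : wpt R m) : set (\bar R) :=
  [set l | exists (a_ b_ : nat -> R) (w_ : nat -> wpt R m),
     (forall j, bichar (a_ j) (b_ j) (w_ j) /\
                strong_sign_change p (a_ j) (b_ j) (w_ j)) /\
     (a%:E <= limn_einf (fun j => (a_ j)%:E))%E /\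
     (limn_esup (fun j => (b_ j)%:E) <= b%:E)%E /\
     (w_ @ \oo --> w) /\
     l = limn_einf (fun j => (b_ j - a_ j)%:E)].

Definition Lp_defined (R : realType) (m : nat) (p : cotangent R m.+1 -> R[i])
  (a b : R) (w : wpt R m) : Prop := Lp_set p a b w !=set0.

Definition Lp (R : realType) (m : nat) (p : cotangent R m.+1 -> R[i])
  (a b : R) (w : wpt R m) : \bar R := ereal_inf (Lp_set p a b w).

Definition wdist (R : realType) (m : nat) (w w' : wpt R m) : R :=
  Num.sqrt (\sum_(i < m) (w.1 ord0 i - w'.1 ord0 i) ^+ 2 +
            \sum_(i < m) (w.2 ord0 i - w'.2 ord0 i) ^+ 2).

(* Main.v *)
Require Import Defs.
From HB Require Import structures.
From mathcomp Require Import all_boot all_order all_algebra.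
From mathcomp Require Import all_classical all_reals all_analysis.
From mathcomp Require Import complex.
From mathcomp Require Import ring lra.
Import Order.TTheory GRing.Theory Num.Theory.
Import numFieldNormedType.Exports.
Local Open Scope classical_set_scope.
Local Open Scope ring_scope.

Section aux.
Context {R : realType}.
Local Open Scope ereal_scope.
Implicit Type (u : (\bar R)^nat).

Lemma einf_sup u : limn_einf u = ereal_sup (range (einfs u)).
Proof. rewrite limn_einf_lim; apply/cvg_lim => //; exact: cvg_einfs_sup. Qed.

Lemma einf_gt u c : c < limn_einf u -> exists N, forall n, (N <= n)%N -> c < u n.
Proof.
rewrite einf_sup => /ereal_sup_gt [_ [N _ <-]] cN; exists N => n Nn.
apply: (lt_le_trans cN); apply: ereal_inf_lbound; by exists n.
Qed.

Lemma einf_lt u c : limn_einf u < c -> forall N, exists n, (N <= n)%N /\ u n < c.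
Proof.
move=> uc N; apply/not_existsP => /= H.
have : c <= einfs u N.
  apply: le_ereal_inf_tmp => _ [n /= Nn <-].
  by rewrite leNgt; apply/negP => h; apply: (H n); split.
move=> cN; move: uc; rewrite einf_sup => uc.
have : einfs u N <= ereal_sup (range (einfs u)) by apply: ereal_sup_ubound; exists N.
by move=> /(le_trans cN); rewrite leNgt uc.
Qed.

Lemma einf_ge u c : (forall n, c <= u n) -> c <= limn_einf u.
Proof.
move=> H; rewrite leNgt; apply/negP => /einf_lt /(_ 0%N) [n [_]].
by rewrite ltNge H.
Qed.

Lemma einf_cst (c : \bar R) : limn_einf (fun _ : nat => c) = c.
Proof. by have [-> _] := cvg_limn_einf_sup (cvg_cst c). Qed.

End aux.

Lemma wdist_near {R : realType} {m : nat} {w_ : nat -> wpt R m} {w0 : wpt R m} {eps : R} :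
  0 < eps -> w_ @ \oo --> w0 -> exists N, forall n, (N <= n)%N -> wdist (w_ n) w0 < eps.
Proof.
move=> e0 /cvg_ballP.
set r := eps / (m%:R + 1).
have r0 : 0 < r by rewrite divr_gt0 // ltr_wpDl.
move=> /(_ r r0) [N _ HN]; exists N => n Nn.
have [B1 B2] := HN n Nn.
have sq : forall x y : R, ball x r y -> (x - y) ^+ 2 <= r ^+ 2.
  move=> x y; rewrite /ball /= ltr_norml => /andP[h1 h2]; nra.
have S : forall (f g : 'rV[R]_m), ball f r g ->
    \sum_(i < m) (g ord0 i - f ord0 i) ^+ 2 <= m%:R * r ^+ 2.
  move=> f g [_ Hfg]; apply: (le_trans (y := \sum_(i < m) r ^+ 2)).
    apply: ler_sum => i _; rewrite -sqrrN opprB; exact: sq.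
  by rewrite sumr_const card_ord mulr_natl.
have := S _ _ B1; have := S _ _ B2 => h2 h1.
rewrite /wdist.
have -> : eps = Num.sqrt (eps ^+ 2) by rewrite sqrtr_sqr gtr0_norm.
rewrite ltr_sqrt ?exprn_gt0 //.
apply: (le_lt_trans (lerD h1 h2)).
have hr : r * (m%:R + 1) = eps by rewrite /r mulfVK // gt_eqF // ltr_wpDl.
have m0 : 0 <= m%:R :> R by [].
rewrite -hr.
nra.
Qed.

Theorem corollary2p12 (R : realType) (m : nat)
  (p : cotangent R m.+1 -> R[i]) (a b : R) (w0 : wpt R m) :
  csmooth_on (@Tstar0 R m.+1) p ->
  (forall z, @Tstar0 R m.+1 z -> complex.Re (p z) = z.2 ord0 ord0) ->
  bichar a b w0 ->
  strong_sign_change p a b w0 ->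
  Lp_defined p a b w0 /\
  (0 <= Lp p a b w0)%E /\ (Lp p a b w0 <= (b - a)%:E)%E /\
  (forall delta eps : R, 0 < delta -> 0 < eps ->
     exists (at_ bt : R) (wt : wpt R m),
       bichar at_ bt wt /\
       a - eps < at_ /\ at_ <= bt /\ bt < b + eps /\
       wdist wt w0 < eps /\
       strong_sign_change p at_ bt wt /\
       ((bt - at_)%:E < Lp p a b w0 + delta%:E)%E).
Proof.
move=> _ _ hb hs.
have inS : Lp_set p a b w0 (b - a)%:E.
  exists (fun _ => a), (fun _ => b), (fun _ => w0); split; first by move=> j; split.
  rewrite !einf_cst; split; first by [].
  split; first by have [_ ->] := cvg_limn_einf_sup (cvg_cst (b%:E)).
  split; first exact: cvg_cst.
  by [].
have ge0 : (0 <= Lp p a b w0)%E.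
  rewrite /Lp; apply: le_ereal_inf_tmp => l [a_ [b_ [w_ [Hj [_ [_ [_ ->]]]]]]].
  apply: einf_ge => n; rewrite lee_fin subr_ge0; by case: (Hj n) => [[]].
have leba : (Lp p a b w0 <= (b - a)%:E)%E by apply: ereal_inf_lbound.
split; first by exists (b - a)%:E.
split => //; split => // delta eps d0 e0.
have : (Lp p a b w0 < Lp p a b w0 + delta%:E)%E.
  have fin : Lp p a b w0 \is a fin_num by rewrite ge0_fin_numE // (le_lt_trans leba) ?ltry.
  by rewrite -(fineK fin) -EFinD lte_fin ltrDl.
move=> /ereal_inf_lt [_ [a_ [b_ [w_ [Hj [Ha [Hb [Hw ->]]]]]]]] hl.
have [N1 H1] : exists N, forall n, (N <= n)%N -> ((a - eps)%:E < (a_ n)%:E)%E.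
  apply: einf_gt; apply: (lt_le_trans _ Ha); by rewrite lte_fin ltrBlDr ltrDl.
have [N2 H2] : exists N, forall n, (N <= n)%N -> ((- (b + eps))%:E < (- b_ n)%:E)%E.
  apply: (@einf_gt R (fun n => (- b_ n)%:E)).
  have -> : limn_einf (fun n => (- b_ n)%:E) = (- limn_esup (fun n => (b_ n)%:E))%E.
    exact: (limn_einfN (fun n => (b_ n)%:E)).
  rewrite EFinN lteN2; apply: (le_lt_trans Hb); by rewrite lte_fin ltrDl.
have [N3 H3] := wdist_near e0 Hw.
have [n [Nn hn]] := einf_lt _ _ hl (maxn N1 (maxn N2 N3)).
move: Nn; rewrite !geq_max => /and3P[n1 n2 n3].
exists (a_ n), (b_ n), (w_ n).
have [[hab hw] hss] := Hj n.
split; first by split.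
split; first by rewrite -lte_fin; exact: H1.
split; first exact: hab.
split; first by move: (H2 n n2); rewrite lte_fin ltrN2.
split; first exact: H3.
by split.
Qed.
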